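(* Let $\sigma_i:\mathbb{R}\to\mathbb{R}$ be a function that is bounded, twice continuously differentiable, has strictly positive first derivative at every point, has exactly one inflection point, located at $0$, satisfies $\sigma_i(0)=0$, $\sigma_i'(0)=1$, is Lipschitz continuous with Lipschitz constant $1$, and satisfies $\sigma_i(v)\in[-1,1]$ for all $v\in\mathbb{R}$. For $v_i,\Delta v_i\in\mathbb{R}$ define $\Delta s_i=\sigma_i(v_i+\Delta v_i)-\sigma_i(v_i)$. Then there exists a continuous, strictly monotonically decreasing function $\bar v_i:(0,1)\to(0,+\infty)$ with $\bar v_i(\lambda)\to+\infty$ as $\lambda\to0^+$ and $\bar v_i(\lambda)\to0$ as $\lambda\to1^-$, such that for every $\lambda_i\in(0,1)$, $$(\Delta v_i-\Delta s_i)(\Delta s_i-\lambda_i\Delta v_i)\geq 0$$ for all pairs $(v_i,v_i+\Delta v_i)\in[-\bar v_i(\lambda_i),\bar v_i(\lambda_i)]^2$. Moreover, for $\lambda_i=0$ the inequality $(\Delta v_i-\Delta s_i)\Delta s_i\geq0$ holds for all $(v_i,v_i+\Delta v_i)\in\mathbb{R}^2$. *)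

(* Defs.v *)
From Stdlib Require Import Reals.
From Coquelicot Require Import Coquelicot.
Open Scope R_scope.

Definition convex_on (f : R -> R) (a b : R) : Prop :=
  forall x y t, a <= x <= b -> a <= y <= b -> 0 <= t <= 1 ->
    f (t * x + (1 - t) * y) <= t * f x + (1 - t) * f y.

Definition concave_on (f : R -> R) (a b : R) : Prop :=
  convex_on (fun x => - f x) a b.

Definition inflection_point (f : R -> R) (x : R) : Prop :=
  exists d, 0 < d /\
    ((convex_on f (x - d) x /\ concave_on f x (x + d)) \/
     (concave_on f (x - d) x /\ convex_on f x (x + d))).

(* Main.v *)
Require Import Defs.
From Stdlib Require Import Reals Lra.
From Coquelicot Require Import Coquelicot.
Open Scope R_scope.

Lemma cont_epsdelta (f : R -> R) x0 : continuity_pt f x0 ->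
  forall eps, 0 < eps -> exists del, 0 < del /\ forall x, Rabs (x - x0) < del -> Rabs (f x - f x0) < eps.
Proof.
  intros H eps He. destruct (H eps He) as [a [Ha Hx]]. exists a; split; auto.
  intros x Hx'. destruct (Req_dec x x0) as [->|Hne].
  - unfold Rminus; rewrite Rplus_opp_r, Rabs_R0; auto.
  - apply (Hx x). split. split. constructor. auto. exact Hx'.
Qed.

Lemma epsdelta_cont (f : R -> R) x0 :
  (forall eps, 0 < eps -> exists del, 0 < del /\ forall x, Rabs (x - x0) < del -> Rabs (f x - f x0) < eps)
  -> continuity_pt f x0.
Proof.
  intros H eps He. destruct (H eps He) as [a [Ha Hx]]. exists a; split; auto.
  intros x [_ Hx']. apply Hx. exact Hx'.
Qed.

Definition Ev (d : R -> R) (v : R) : R -> Prop :=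
  fun y => exists x, Rabs x <= Rabs v /\ y = - d x.

Lemma Ev_bound d (Hp : forall x, 0 < d x) v : bound (Ev d v).
Proof. exists 0. intros y [x [_ ->]]. specialize (Hp x). lra. Qed.

Lemma Ev_ne d v : exists y, Ev d v y.
Proof. exists (- d 0). exists 0. split; auto. rewrite Rabs_R0. apply Rabs_pos. Qed.

Definition mm d (Hp : forall x, 0 < d x) (v : R) : R :=
  - proj1_sig (completeness (Ev d v) (Ev_bound d Hp v) (Ev_ne d v)).

Lemma mm_low d Hp v x : Rabs x <= Rabs v -> mm d Hp v <= d x.
Proof.
  intros H. unfold mm. destruct completeness as [l [Hl1 Hl2]]; simpl.
  assert (- d x <= l) by (apply Hl1; exists x; auto). lra.
Qed.

Lemma mm_great d Hp v L : (forall x, Rabs x <= Rabs v -> L <= d x) -> L <= mm d Hp v.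
Proof.
  intros H. unfold mm. destruct completeness as [l [Hl1 Hl2]]; simpl.
  assert (l <= - L). { apply Hl2. intros y [x [Hx ->]]. specialize (H x Hx). lra. }
  lra.
Qed.

Lemma mm_pos d Hp (Hc : forall x, continuity_pt d x) v : 0 < mm d Hp v.
Proof.
  destruct (continuity_ab_min d (- Rabs v) (Rabs v)) as [mx [H1 H2]].
  { pose proof (Rabs_pos v); lra. }
  { intros; apply Hc. }
  apply Rlt_le_trans with (d mx). apply Hp.
  apply mm_great. intros x Hx. apply H1. apply Rabs_le_between. exact Hx.
Qed.

Lemma mm_mono d Hp v w : Rabs v <= Rabs w -> mm d Hp w <= mm d Hp v.
Proof.
  intros H. apply mm_great. intros x Hx. apply mm_low. lra.
Qed.

Lemma mm_cont d Hp (Hc : forall x, continuity_pt d x) v0 : continuity_pt (mm d Hp) v0.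
Proof.
  apply epsdelta_cont. intros eps He.
  destruct (cont_epsdelta d (Rabs v0) (Hc _) (eps/4)) as [d1 [Hd1 H1]]; [lra|].
  destruct (cont_epsdelta d (- Rabs v0) (Hc _) (eps/4)) as [d2 [Hd2 H2]]; [lra|].
  exists (Rmin d1 d2). split. apply Rmin_glb_lt; auto.
  intros v Hv.
  assert (Ha : Rabs (Rabs v - Rabs v0) < Rmin d1 d2).
  { eapply Rle_lt_trans. apply Rabs_triang_inv2. exact Hv. }
  assert (Hm1 := Rmin_l d1 d2). assert (Hm2 := Rmin_r d1 d2).
  set (a := Rabs v) in *. set (a0 := Rabs v0) in *.
  assert (Ha0 : 0 <= a0) by apply Rabs_pos. assert (Haa : 0 <= a) by apply Rabs_pos.
  destruct (Rle_or_lt a0 a) as [Hle|Hlt].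
  - assert (mm d Hp v <= mm d Hp v0) by (apply mm_mono; auto).
    assert (mm d Hp v0 - eps/2 <= mm d Hp v).
    { apply mm_great. intros x Hx.
      destruct (Rle_or_lt (Rabs x) a0) as [Hx0|Hx0].
      - assert (mm d Hp v0 <= d x) by (apply mm_low; unfold a0 in Hx0; auto).
        lra.
      - destruct (Rle_or_lt 0 x) as [Hxp|Hxn].
        + rewrite Rabs_right in Hx0 by lra. fold a in Hx. rewrite Rabs_right in Hx by lra.
          assert (E1 : Rabs (d x - d a0) < eps/4).
          { apply H1. rewrite Rabs_right by lra. rewrite Rabs_right in Ha by lra. lra. }
          assert (mm d Hp v0 <= d a0) by (apply mm_low; unfold a0; rewrite Rabs_Rabsolu; lra).
          apply Rabs_def2 in E1. lra.
        + rewrite Rabs_left in Hx0 by lra. fold a in Hx. rewrite Rabs_left in Hx by lra.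
          assert (E1 : Rabs (d x - d (- a0)) < eps/4).
          { apply H2. rewrite Rabs_left by lra. rewrite Rabs_right in Ha by lra. lra. }
          assert (mm d Hp v0 <= d (-a0)) by (apply mm_low; unfold a0; rewrite Rabs_Ropp, Rabs_Rabsolu; lra).
          apply Rabs_def2 in E1. lra. }
    apply Rabs_def1; lra.
  - assert (mm d Hp v0 <= mm d Hp v) by (apply mm_mono; fold a a0; lra).
    assert (mm d Hp v - eps/2 <= mm d Hp v0).
    { apply mm_great. intros x Hx.
      destruct (Rle_or_lt (Rabs x) a) as [Hx0|Hx0].
      - assert (mm d Hp v <= d x) by (apply mm_low; auto). lra.
      - rewrite Rabs_left in Ha by lra.
        destruct (Rle_or_lt 0 x) as [Hxp|Hxn].
        + rewrite Rabs_right in Hx0 by lra. fold a0 in Hx. rewrite Rabs_right in Hx by lra.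
          assert (E1 : Rabs (d x - d a0) < eps/4).
          { apply H1. rewrite Rabs_left1 by lra. lra. }
          assert (E2 : Rabs (d a - d a0) < eps/4).
          { apply H1. rewrite Rabs_left by lra. lra. }
          assert (mm d Hp v <= d a) by (apply mm_low; unfold a; rewrite Rabs_Rabsolu; lra).
          apply Rabs_def2 in E1. apply Rabs_def2 in E2. lra.
        + rewrite Rabs_left in Hx0 by lra. fold a0 in Hx. rewrite Rabs_left in Hx by lra.
          assert (E1 : Rabs (d x - d (-a0)) < eps/4).
          { apply H2. rewrite Rabs_right by lra. lra. }
          assert (E2 : Rabs (d (-a) - d (-a0)) < eps/4).
          { apply H2. rewrite Rabs_right by lra. lra. }
          assert (mm d Hp v <= d (-a)) by (apply mm_low; unfold a; rewrite Rabs_Ropp, Rabs_Rabsolu; lra).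
          apply Rabs_def2 in E1. apply Rabs_def2 in E2. lra. }
    apply Rabs_def1; lra.
Qed.

Definition hh d Hp v := mm d Hp v / (1 + Rabs v).

Lemma hh_cont d Hp (Hc : forall x, continuity_pt d x) : continuity (hh d Hp).
Proof.
  intros x. unfold hh.
  apply (continuity_pt_div (mm d Hp) (fun v => 1 + Rabs v)).
  - apply mm_cont; auto.
  - apply continuity_pt_plus. apply continuity_pt_const. intros a b; auto. apply Rcontinuity_abs.
  - pose proof (Rabs_pos x). lra.
Qed.

Lemma hh_strict d Hp (Hc : forall x, continuity_pt d x) a b : 0 <= a -> a < b -> hh d Hp b < hh d Hp a.
Proof.
  intros Ha Hab. unfold hh. rewrite (Rabs_right a), (Rabs_right b) by lra.
  assert (H1 : mm d Hp b <= mm d Hp a) by (apply mm_mono; rewrite !Rabs_right; lra).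
  assert (H2 := mm_pos d Hp Hc b).
  apply Rlt_le_trans with (mm d Hp b / (1 + a)).
  - unfold Rdiv. apply Rmult_lt_compat_l; auto. apply Rinv_lt_contravar; nra.
  - unfold Rdiv. apply Rmult_le_compat_r; auto. left; apply Rinv_0_lt_compat; lra.
Qed.

Lemma hh_mono d Hp (Hc : forall x, continuity_pt d x) a b : 0 <= a -> a <= b -> hh d Hp b <= hh d Hp a.
Proof. intros Ha [H|H]. left; apply hh_strict; auto. subst; lra. Qed.

Lemma hh_0 d Hp (H0 : d 0 = 1) : hh d Hp 0 = 1.
Proof.
  unfold hh. rewrite Rabs_R0, Rplus_0_r.
  assert (mm d Hp 0 = 1).
  { apply Rle_antisym. rewrite <- H0. apply mm_low. lra.
    apply mm_great. intros x Hx. rewrite Rabs_R0 in Hx.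
    assert (x = 0) by (pose proof (Rabs_pos x); destruct (Req_dec x 0); auto; pose proof (Rabs_no_R0 x); lra).
    subst; lra. }
  rewrite H. field.
Qed.

Lemma hh_pos d Hp (Hc : forall x, continuity_pt d x) v : 0 < hh d Hp v.
Proof.
  unfold hh. pose proof (mm_pos d Hp Hc v). pose proof (Rabs_pos v).
  apply Rdiv_lt_0_compat; lra.
Qed.

Lemma hh_le d Hp (H0 : d 0 = 1) v : hh d Hp v <= 1 / (1 + Rabs v).
Proof.
  unfold hh. pose proof (Rabs_pos v). unfold Rdiv. apply Rmult_le_compat_r.
  left; apply Rinv_0_lt_compat; lra. rewrite <- H0. apply mm_low. rewrite Rabs_R0; auto.
Qed.

Lemma vsig d Hp (Hc : forall x, continuity_pt d x) (H0 : d 0 = 1) l :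
  0 < l < 1 -> {v | 0 <= v /\ hh d Hp v = l}.
Proof.
  intros Hl.
  destruct (IVT (fun v => l - hh d Hp v) 0 (/ l)) as [z [Hz1 Hz2]].
  - intros x. apply continuity_pt_minus. apply continuity_pt_const; intros a b; auto.
    apply hh_cont; auto.
  - apply Rinv_0_lt_compat; lra.
  - rewrite hh_0; auto. lra.
  - pose proof (hh_le d Hp H0 (/ l)). rewrite Rabs_right in H.
    2: left; apply Rinv_0_lt_compat; lra.
    assert (1 / (1 + / l) < l).
    { replace (1 / (1 + / l)) with (l / (l + 1)) by (field; lra).
      apply Rmult_lt_reg_r with (l + 1). lra. unfold Rdiv. rewrite Rmult_assoc, Rinv_l by lra. nra. }
    lra.
  - exists z. split. lra. lra.
Qed.

Definition vb d Hp Hc H0 (l : R) : R :=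
  match Rlt_dec 0 l with
  | left p => match Rlt_dec l 1 with
              | left q => proj1_sig (vsig d Hp Hc H0 l (conj p q))
              | right _ => 0 end
  | right _ => 0 end.

Lemma vb_spec d Hp Hc H0 l : 0 < l < 1 -> 0 <= vb d Hp Hc H0 l /\ hh d Hp (vb d Hp Hc H0 l) = l.
Proof.
  intros Hl. unfold vb. destruct (Rlt_dec 0 l); [|lra]. destruct (Rlt_dec l 1); [|lra].
  destruct vsig as [v Hv]. simpl. auto.
Qed.

Lemma vb_key1 d Hp Hc H0 l w : 0 < l < 1 -> 0 <= w -> hh d Hp w < l -> vb d Hp Hc H0 l < w.
Proof.
  intros Hl Hw H. destruct (vb_spec d Hp Hc H0 l Hl) as [A B].
  destruct (Rlt_or_le (vb d Hp Hc H0 l) w) as [|C]; auto.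
  pose proof (hh_mono d Hp Hc w _ Hw C). lra.
Qed.

Lemma vb_key2 d Hp Hc H0 l w : 0 < l < 1 -> 0 <= w -> l < hh d Hp w -> w < vb d Hp Hc H0 l.
Proof.
  intros Hl Hw H. destruct (vb_spec d Hp Hc H0 l Hl) as [A B].
  destruct (Rlt_or_le w (vb d Hp Hc H0 l)) as [|C]; auto.
  pose proof (hh_mono d Hp Hc _ w A C). lra.
Qed.

Lemma vb_all d (Hp : forall x, 0 < d x) (Hc : forall x, continuity_pt d x) (H0 : d 0 = 1) :
  exists vbar : R -> R,
     (forall l, 0 < l < 1 -> 0 < vbar l) /\
     (forall l, 0 < l < 1 -> continuous vbar l) /\
     (forall l1 l2, 0 < l1 < 1 -> 0 < l2 < 1 -> l1 < l2 -> vbar l2 < vbar l1) /\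
     filterlim vbar (at_right 0) (Rbar_locally p_infty) /\
     filterlim vbar (at_left 1) (locally 0) /\
     (forall l, 0 < l < 1 -> forall x, Rabs x <= vbar l -> l <= d x).
Proof.
  set (V := vb d Hp Hc H0).
  assert (Hpos : forall l, 0 < l < 1 -> 0 < V l).
  { intros l Hl. destruct (vb_spec d Hp Hc H0 l Hl) as [A B]. fold V in A, B.
    destruct A as [A|A]; auto. rewrite <- A in B. rewrite hh_0 in B; auto. lra. }
  exists V. split; [exact Hpos|]. split; [|split; [|split; [|split]]].
  - intros l0 Hl0. apply continuity_pt_filterlim. apply epsdelta_cont.
    intros eps He. pose proof (Hpos l0 Hl0) as Hv0.
    set (v0 := V l0) in *.
    set (e := Rmin eps v0 / 2).
    assert (He1 : 0 < e) by (unfold e; pose proof (Rmin_glb_lt eps v0 0 He Hv0); lra).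
    assert (He2 : e < eps) by (unfold e; pose proof (Rmin_l eps v0); lra).
    assert (He3 : e < v0) by (unfold e; pose proof (Rmin_r eps v0); lra).
    destruct (vb_spec d Hp Hc H0 l0 Hl0) as [_ B]. fold V v0 in B.
    assert (Ha : l0 < hh d Hp (v0 - e)) by (rewrite <- B; apply hh_strict; auto; lra).
    assert (Hb : hh d Hp (v0 + e) < l0) by (rewrite <- B; apply hh_strict; auto; lra).
    exists (Rmin (hh d Hp (v0 - e) - l0) (l0 - hh d Hp (v0 + e))).
    split. apply Rmin_glb_lt; lra.
    intros l Hl. pose proof (Rmin_l (hh d Hp (v0 - e) - l0) (l0 - hh d Hp (v0 + e))).
    pose proof (Rmin_r (hh d Hp (v0 - e) - l0) (l0 - hh d Hp (v0 + e))).
    apply Rabs_def2 in Hl.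
    assert (hh d Hp (v0 - e) <= 1) by (rewrite <- (hh_0 d Hp H0); apply hh_mono; auto; lra).
    pose proof (hh_pos d Hp Hc (v0 + e)).
    assert (Hl1 : 0 < l < 1) by lra.
    pose proof (vb_key1 d Hp Hc H0 l (v0 + e) Hl1 ltac:(lra) ltac:(lra)) as K1.
    pose proof (vb_key2 d Hp Hc H0 l (v0 - e) Hl1 ltac:(lra) ltac:(lra)) as K2.
    fold V in K1, K2. apply Rabs_def1; lra.
  - intros l1 l2 Hl1 Hl2 H12. destruct (vb_spec d Hp Hc H0 l2 Hl2) as [A B].
    fold V in A, B. apply vb_key2; auto. rewrite B. lra.
  - intros P [M HM]. simpl.
    set (w := Rmax M 0 + 1).
    assert (Hw : 0 <= w) by (unfold w; pose proof (Rmax_r M 0); lra).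
    pose proof (hh_pos d Hp Hc w) as Hhw.
    pose proof (hh_le d Hp H0 w) as Hhw2. rewrite Rabs_right in Hhw2 by lra.
    assert (1 / (1 + w) <= 1) by (unfold Rdiv; rewrite Rmult_1_l; rewrite <- Rinv_1; apply Rinv_le_contravar; lra).
    exists (mkposreal _ Hhw). intros l Hl Hl0. simpl in Hl.
    unfold ball in Hl; simpl in Hl; unfold AbsRing_ball, abs, minus, plus, opp in Hl; simpl in Hl.
    rewrite Ropp_0, Rplus_0_r, Rabs_right in Hl by lra.
    apply HM. pose proof (vb_key2 d Hp Hc H0 l w ltac:(lra) Hw Hl).
    unfold w in H1. pose proof (Rmax_l M 0). fold V in H1. lra.
  - intros P [eps HP]. simpl.
    set (w := eps / 2).
    assert (Hw : 0 < w) by (unfold w; destruct eps; simpl; lra).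
    assert (Hhw : hh d Hp w < 1) by (rewrite <- (hh_0 d Hp H0); apply hh_strict; auto; lra).
    assert (Hd : 0 < 1 - hh d Hp w) by lra.
    pose proof (hh_pos d Hp Hc w).
    exists (mkposreal _ Hd). intros l Hl Hl1. simpl in Hl.
    unfold ball in Hl; simpl in Hl; unfold AbsRing_ball, abs, minus, plus, opp in Hl; simpl in Hl.
    rewrite Rabs_left in Hl by lra.
    assert (Hl2 : 0 < l < 1) by lra.
    pose proof (vb_key1 d Hp Hc H0 l w Hl2 ltac:(lra) ltac:(lra)).
    pose proof (Hpos l Hl2). fold V in H1.
    apply HP. unfold ball; simpl; unfold AbsRing_ball, abs, minus, plus, opp; simpl.
    rewrite Ropp_0, Rplus_0_r, Rabs_right by lra. unfold w in H1. destruct eps; simpl in *; lra.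
  - intros l Hl x Hx. destruct (vb_spec d Hp Hc H0 l Hl) as [A B]. fold V in A, B.
    assert (mm d Hp (V l) <= d x) by (apply mm_low; rewrite (Rabs_right (V l)); lra).
    unfold hh in B. rewrite Rabs_right in B by lra.
    assert (mm d Hp (V l) = l * (1 + V l)) by (rewrite <- B at 2; field; lra).
    nra.
Qed.

Lemma mvt_s (sigma : R -> R) (Hd1 : forall v, ex_derive sigma v)
  (Hlip : forall x y, Rabs (sigma x - sigma y) <= Rabs (x - y)) v dv :
  exists c, Rmin v (v + dv) <= c <= Rmax v (v + dv) /\
    sigma (v + dv) - sigma v = Derive sigma c * dv /\ (dv <> 0 -> Derive sigma c <= 1).
Proof.
  destruct (MVT_gen sigma v (v + dv) (Derive sigma)) as [c [Hc1 Hc2]].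
  - intros x _. apply Derive_correct. apply Hd1.
  - intros x _. apply continuity_pt_filterlim. apply (ex_derive_continuous (K:=R_AbsRing) (V:=R_NormedModule)). apply Hd1.
  - exists c. split; auto. replace (v + dv - v) with dv in Hc2 by ring. split; auto.
    intros Hdv. specialize (Hlip (v + dv) v). rewrite Hc2 in Hlip.
    replace (v + dv - v) with dv in Hlip by ring. rewrite Rabs_mult in Hlip.
    pose proof (Rabs_pos_lt dv Hdv).
    assert (Rabs (Derive sigma c) <= 1).
    { apply Rmult_le_reg_r with (Rabs dv); auto. lra. }
    apply Rabs_le_between in H0. lra.
Qed.
Theorem lemma2 (sigma : R -> R)
  (Hbounded : exists M, forall v, Rabs (sigma v) <= M)
  (Hd1 : forall v, ex_derive sigma v)
  (Hd2 : forall v, ex_derive (Derive sigma) v)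
  (Hd2c : forall v, continuous (Derive (Derive sigma)) v)
  (Hpos : forall v, 0 < Derive sigma v)
  (Hinfl : forall v, inflection_point sigma v <-> v = 0)
  (H0 : sigma 0 = 0)
  (Hd0 : Derive sigma 0 = 1)
  (Hlip : forall x y, Rabs (sigma x - sigma y) <= Rabs (x - y))
  (Hrange : forall v, -1 <= sigma v <= 1) :
  (exists vbar : R -> R,
     (forall l, 0 < l < 1 -> 0 < vbar l) /\
     (forall l, 0 < l < 1 -> continuous vbar l) /\
     (forall l1 l2, 0 < l1 < 1 -> 0 < l2 < 1 -> l1 < l2 -> vbar l2 < vbar l1) /\
     filterlim vbar (at_right 0) (Rbar_locally p_infty) /\
     filterlim vbar (at_left 1) (locally 0) /\
     (forall l, 0 < l < 1 ->
        forall v dv,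
          - vbar l <= v <= vbar l ->
          - vbar l <= v + dv <= vbar l ->
          (dv - (sigma (v + dv) - sigma v)) *
          ((sigma (v + dv) - sigma v) - l * dv) >= 0)) /\
  (forall v dv,
     (dv - (sigma (v + dv) - sigma v)) * (sigma (v + dv) - sigma v) >= 0).
Proof.
  assert (Hc : forall x, continuity_pt (Derive sigma) x).
  { intros x. apply continuity_pt_filterlim.
    apply (ex_derive_continuous (K:=R_AbsRing) (V:=R_NormedModule)). apply Hd2. }
  split.
  - destruct (vb_all (Derive sigma) Hpos Hc Hd0) as [V [P1 [P2 [P3 [P4 [P5 P6]]]]]].
    exists V. do 5 (split; [assumption|]).
    intros l Hl v dv Hv Hw.
    destruct (mvt_s sigma Hd1 Hlip v dv) as [c [Hc1 [Hc2 Hc3]]].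
    rewrite Hc2. set (s := Derive sigma c) in *.
    assert (Hcs : Rabs c <= V l).
    { apply Rabs_le. pose proof (Rmin_glb (V l * -1 + 0) v (v + dv)).
      split.
      - apply Rle_trans with (Rmin v (v + dv)); [|lra]. apply Rmin_glb; lra.
      - apply Rle_trans with (Rmax v (v + dv)); [lra|]. apply Rmax_lub; lra. }
    pose proof (P6 l Hl c Hcs). fold s in H.
    destruct (Req_dec dv 0) as [->|Hdv].
    + rewrite Rmult_0_r. lra.
    + specialize (Hc3 Hdv).
      replace ((dv - s * dv) * (s * dv - l * dv)) with ((1 - s) * (s - l) * (dv * dv)) by ring.
      apply Rle_ge. apply Rmult_le_pos. apply Rmult_le_pos; lra. nra.
  - intros v dv.
    destruct (mvt_s sigma Hd1 Hlip v dv) as [c [Hc1 [Hc2 Hc3]]].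
    rewrite Hc2. set (s := Derive sigma c) in *. pose proof (Hpos c). fold s in H.
    destruct (Req_dec dv 0) as [->|Hdv].
    + rewrite Rmult_0_r. lra.
    + specialize (Hc3 Hdv).
      replace ((dv - s * dv) * (s * dv)) with ((1 - s) * s * (dv * dv)) by ring.
      apply Rle_ge. apply Rmult_le_pos. apply Rmult_le_pos; lra. nra.
Qed.
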